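(* For all positive integers $n,p$, $$\beta(n,p,2)=\beta^*(n,p,2)=\Theta\left(\min\left\{np^{1/2},\,n^{2/3}p\right\}+n+p\right),$$ where the hidden constants are absolute.
   Context: A path system is a pair $S=(V,\Pi)$ where $V$ is a finite ground set of nodes and $\Pi$ is a multiset of finite sequences of nodes (called paths), each path containing each node at most once. The size of $S$ is $\|S\|=\sum_{\pi\in\Pi}|\pi|$, where $|\pi|$ is the number of nodes of $\pi$. For a path $\pi$, write $x<_\pi y$ if $x,y\in\pi$ and $x$ strictly precedes $y$ in $\pi$. A $b$-bridge in $S$ consists of $b$ distinct nodes $v_1,\dots,v_b$ and $b$ distinct paths $\pi_1,\dots,\pi_b\in\Pi$ such that $v_i<_{\pi_i}v_{i+1}$ for all $1\le i\le b-1$ and $v_1<_{\pi_b}v_b$; $\pi_b$ is called the river and $\pi_1,\dots,\pi_{b-1}$ the arcs. The bridge girth of $S$ is the least $b$ such that $S$ has a $b$-bridge ($\infty$ if none). $\beta(n,p,k)$ denotes the maximum possible size of a path system with $n$ nodes, $p$ paths and bridge girth $>k$ ($k=\infty$ allowed). An ordered path system is a path system together with a total order on its paths; an ordered bridge is a bridge whose river comes after all its arcs in this order; the ordered bridge girth is the least $b$ such that there is an ordered $b$-bridge. $\beta^*(n,p,k)$ denotes the maximum possible size of an ordered path system with $n$ nodes, $p$ paths and ordered bridge girth $>k$. *)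

(* Defs.v *)
From mathcomp Require Import all_boot fingroup perm.
From Stdlib Require Import ClassicalEpsilon.
Set Implicit Arguments. Unset Strict Implicit. Unset Printing Implicit Defensive.

(* A path system on the ground set 'I_n with p paths (a multiset of paths is
   modelled as a 'I_p-indexed family): P i is the i-th path. *)
Definition path_system (n p : nat) (P : 'I_p -> seq 'I_n) : Prop :=
  forall i, uniq (P i).

Definition psize (n p : nat) (P : 'I_p -> seq 'I_n) : nat :=
  \sum_(i < p) size (P i).

Definition precedes (T : eqType) (s : seq T) (x y : T) : bool :=
  [&& x \in s, y \in s & index x s < index y s].

Definition is_bridge (n p : nat) (P : 'I_p -> seq 'I_n) (b : nat)
  (v : nat -> 'I_n) (r : nat -> 'I_p) : Prop :=
  [/\ 0 < b,
      (forall i j, i < b -> j < b -> v i = v j -> i = j),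
      (forall i j, i < b -> j < b -> r i = r j -> i = j),
      (forall i, i.+1 < b -> precedes (P (r i)) (v i) (v i.+1)) &
      precedes (P (r b.-1)) (v 0) (v b.-1)].

Definition bridge_girth_gt (n p : nat) (P : 'I_p -> seq 'I_n) (k : nat) : Prop :=
  forall b, b <= k -> ~ exists v r, is_bridge P b v r.

(* Ordered path systems: the total order on paths is given by a permutation
   sigma (path i comes before path j iff sigma i < sigma j). *)
Definition is_ordered_bridge (n p : nat) (P : 'I_p -> seq 'I_n) (sigma : {perm 'I_p})
  (b : nat) (v : nat -> 'I_n) (r : nat -> 'I_p) : Prop :=
  is_bridge P b v r /\ (forall i, i < b.-1 -> (sigma (r i) < sigma (r b.-1))%N).

Definition ordered_bridge_girth_gt (n p : nat) (P : 'I_p -> seq 'I_n)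
  (sigma : {perm 'I_p}) (k : nat) : Prop :=
  forall b, b <= k -> ~ exists v r, is_ordered_bridge P sigma b v r.

Definition achievable (n p k s : nat) : Prop :=
  exists P : 'I_p -> seq 'I_n,
    [/\ path_system P, bridge_girth_gt P k & psize P = s].

Definition achievable_ord (n p k s : nat) : Prop :=
  exists (P : 'I_p -> seq 'I_n) (sigma : {perm 'I_p}),
    [/\ path_system P, ordered_bridge_girth_gt P sigma k & psize P = s].

Definition decb (Q : Prop) : bool :=
  if excluded_middle_informative Q then true else false.

Lemma decbP (Q : Prop) : decb Q <-> Q.
Proof. by rewrite /decb; case: excluded_middle_informative. Qed.

Lemma psize_bound (n p : nat) (P : 'I_p -> seq 'I_n) :
  path_system P -> psize P <= p * n.
Proof.
move=> HP; rewrite /psize.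
apply: (@leq_trans (\sum_(i < p) n)); last by rewrite sum_nat_const card_ord.
apply: leq_sum => i _.
by rewrite -(card_uniqP (HP i)) -[X in _ <= X](card_ord n) max_card.
Qed.

Lemma empty_no_bridge (n p k : nat) :
  bridge_girth_gt (fun _ : 'I_p => [::] : seq 'I_n) k.
Proof. by move=> b _ [v [r [_ _ _ _]]]. Qed.

Lemma achievable_ex (n p k : nat) : exists s, decb (achievable n p k s).
Proof.
exists 0; apply/decbP; exists (fun _ => [::]); split => //.
- exact: empty_no_bridge.
- by rewrite /psize big1.
Qed.

Lemma achievable_ub (n p k : nat) : forall s, decb (achievable n p k s) -> s <= p * n.
Proof. by move=> s /decbP [P [HP _ <-]]; exact: psize_bound. Qed.

Lemma achievable_ord_ex (n p k : nat) : exists s, decb (achievable_ord n p k s).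
Proof.
exists 0; apply/decbP; exists (fun _ => [::]), 1%g; split => //.
- by move=> b _ [v [r [[_ _ _ _ H] _]]].
- by rewrite /psize big1.
Qed.

Lemma achievable_ord_ub (n p k : nat) :
  forall s, decb (achievable_ord n p k s) -> s <= p * n.
Proof. by move=> s /decbP [P [sigma [HP _ <-]]]; exact: psize_bound. Qed.

Definition beta (n p k : nat) : nat :=
  ex_maxn (achievable_ex n p k) (@achievable_ub n p k).

Definition beta_star (n p k : nat) : nat :=
  ex_maxn (achievable_ord_ex n p k) (@achievable_ord_ub n p k).

(* Main.v *)
Require Import Defs.
From mathcomp Require Import all_boot fingroup perm.
From mathcomp Require all_algebra.
From mathcomp Require Import ring zify.
From mathcomp Require cyclic finfield.
Set Implicit Arguments. Unset Strict Implicit. Unset Printing Implicit Defensive.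

Module CommonM.

Definition nocommon (T : eqType) (I : Type) (s : I -> seq T) : Prop :=
  forall i j x y, i <> j -> precedes (s i) x y -> precedes (s j) x y -> False.

Lemma precedes_neq (T : eqType) (s : seq T) x y : precedes s x y -> x != y.
Proof. by case/and3P=> _ _; apply: contraTneq => ->; rewrite ltnn. Qed.

Lemma girth2_nocommon n p (P : 'I_p -> seq 'I_n) :
  bridge_girth_gt P 2 -> nocommon P.
Proof.
move=> H i j x y ij Pi Pj; apply: (H 2 (leqnn 2)).
exists (fun k => if k == 0 then x else y), (fun k => if k == 0 then i else j).
split => //.
- have := precedes_neq Pi.
  by move=> xy [|[|a]] [|[|b]] //= _ _ exy; rewrite exy eqxx in xy.
- by move=> [|[|a]] [|[|b]] //= _ _ eij; rewrite eij in ij.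
- by move=> [|[|a]] //.
Qed.

Lemma nocommon_girth2 n p (P : 'I_p -> seq 'I_n) :
  nocommon P -> bridge_girth_gt P 2.
Proof.
move=> H [|[|[|b]]] // _ [v [r [_ injv injr Hc Hr]]].
- by move: Hr => /= /and3P [_ _]; rewrite ltnn.
- by move: Hr => /= /and3P [_ _]; rewrite ltnn.
- have Hr0 := Hc 0 (erefl _); move: Hr => /= Hr1.
  by apply: (H (r 0) (r 1) (v 0) (v 1)) => // e; have := injr 0 1 isT isT e.
Qed.

Lemma precedes_map (A B : eqType) (f : A -> B) (s : seq A) x y :
  injective f -> precedes (map f s) (f x) (f y) = precedes s x y.
Proof. by move=> fi; rewrite /precedes !mem_map // !index_map. Qed.

Section Transfer.
Variables (A I : finType) (n p : nat) (s : I -> seq A).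
Hypotheses (hA : #|A| <= n) (hI : #|I| <= p).

Definition eA (a : A) : 'I_n := widen_ord hA (enum_rank a).
Lemma eA_inj : injective eA.
Proof. by move=> a b /(congr1 val) /= /val_inj /enum_rank_inj. Qed.

Definition tP (j : 'I_p) : seq 'I_n :=
  if (insub (val j) : option 'I_#|I|) is Some k then map eA (s (enum_val k))
  else [::].

Lemma transfer : (forall i, uniq (s i)) -> nocommon s ->
  achievable n p 2 (\sum_i size (s i)).
Proof.
move=> Hu Hn; exists tP; split.
- move=> j; rewrite /tP; case: insubP => // k _ _.
  by rewrite map_inj_uniq ?Hu //; exact: eA_inj.
- apply: nocommon_girth2 => i j x y ij.
  rewrite /tP; case: insubP => [ki _ eki|_]; last by case/and3P.
  case: insubP => [kj _ ekj|_]; last by move=> _; case/and3P.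
  move=> Pi Pj.
  have /mapP [x' _ ex] : x \in map eA (s (enum_val ki)) by case/and3P: Pi.
  have /mapP [y' _ ey] : y \in map eA (s (enum_val ki)) by case/and3P: Pi.
  subst x y; rewrite !precedes_map in Pi Pj; try exact: eA_inj.
  apply: (Hn _ _ _ _ _ Pi Pj) => /enum_val_inj eij; apply: ij.
  by apply: val_inj; rewrite -eki -ekj eij.
- rewrite /psize (big_enum_val (fun i => size (s i))) /=.
  pose G (i : nat) := if (insub i : option 'I_#|I|) is Some k
                       then size (s (enum_val k)) else 0.
  have -> : \sum_(k < #|I|) size (s (enum_val k)) = \sum_(k < #|I|) G k.
    by apply: eq_bigr => k _; rewrite /G valK.
  rewrite (big_ord_widen _ G hI) [RHS]big_mkcond /=.


  apply: eq_bigr => j _; rewrite /tP /G.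
  by case: insubP => [k -> _|/negbTE ->] //; rewrite size_map.
Qed.
End Transfer.

Lemma beta_ge n p k s : achievable n p k s -> s <= beta n p k.
Proof. by rewrite /beta; case: ex_maxnP => m _ Hm H; apply: Hm; apply/decbP. Qed.

Lemma beta_ach n p k : achievable n p k (beta n p k).
Proof. by rewrite /beta; case: ex_maxnP => m /decbP. Qed.

Lemma beta_star_ge n p k s : achievable_ord n p k s -> s <= beta_star n p k.
Proof. by rewrite /beta_star; case: ex_maxnP => m _ Hm H; apply: Hm; apply/decbP. Qed.

Lemma beta_star_ach n p k : achievable_ord n p k (beta_star n p k).
Proof. by rewrite /beta_star; case: ex_maxnP => m /decbP. Qed.

Lemma ach_ord2 n p s : achievable n p 2 s <-> achievable_ord n p 2 s.
Proof.
split.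
- case=> P [HP Hg Hs]; exists P, 1%g; split => // b hb [v [r [Hb _]]].
  by apply: (Hg b hb); exists v, r.
- case=> P [sg [HP Hg Hs]]; exists P; split => //.
  apply: nocommon_girth2 => i j x y ij Pi Pj.
  have [lt|le] := ltnP (sg i) (sg j).
  + apply: (Hg 2 (leqnn 2)).
    exists (fun k => if k == 0 then x else y), (fun k => if k == 0 then i else j).
    split; last by move=> [|k] //.
    split => //.
    * have := precedes_neq Pi.
      by move=> xy [|[|a]] [|[|b]] //= _ _ exy; rewrite exy eqxx in xy.
    * by move=> [|[|a]] [|[|b]] //= _ _ eij; rewrite eij in ij.
    * by move=> [|[|a]] //.
  + have lt : sg j < sg i.
      rewrite ltn_neqAle le andbT; apply/negP => /eqP /val_inj /perm_inj.
      by move/esym.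
    apply: (Hg 2 (leqnn 2)).
    exists (fun k => if k == 0 then x else y), (fun k => if k == 0 then j else i).
    split; last by move=> [|k] //.
    split => //.
    * have := precedes_neq Pi.
      by move=> xy [|[|a]] [|[|b]] //= _ _ exy; rewrite exy eqxx in xy.
    * by move=> [|[|a]] [|[|b]] //= _ _ eij; rewrite eij in ij.
    * by move=> [|[|a]] //.
Qed.

Lemma beta_eq n p : beta n p 2 = beta_star n p 2.
Proof.
apply/eqP; rewrite eqn_leq; apply/andP; split.
- by apply: beta_star_ge; apply/ach_ord2; exact: beta_ach.
- by apply: beta_ge; apply/ach_ord2; exact: beta_star_ach.
Qed.

End CommonM.
Import CommonM.

Module UpperM.

Lemma sum_le1 (I : finType) (c : pred I) :
  (forall i j, c i -> c j -> i = j) -> \sum_i (c i : nat) <= 1.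
Proof.
move=> H; case: (pickP c) => [i0 ci0|c0].
- rewrite (bigD1 i0) //= ci0 big1 // => i ii0.
  case E: (c i) => //; case/eqP: ii0; exact: H.
- by rewrite big1 // => i _; rewrite c0.
Qed.

Lemma sum_eq1 (I : finType) (j : I) (F : I -> nat) :
  \sum_i ((i == j) * F i) = F j.
Proof.
rewrite (bigD1 j) //= eqxx mul1n big1 ?addn0 // => i /negbTE ->; by rewrite mul0n.
Qed.

Lemma sum_eq1' (I : finType) (j : I) (F : I -> nat) :
  \sum_i ((j == i) * F i) = F j.
Proof. by rewrite -(sum_eq1 j F); apply: eq_bigr => i _; rewrite eq_sym. Qed.

Lemma size_sum (n : nat) (s : seq 'I_n) : uniq s -> size s = \sum_x (x \in s : nat).
Proof.
move=> us; rewrite -(card_uniqP us) -sum1_card big_mkcond /=.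
by apply: eq_bigr => x _; case: (x \in s).
Qed.

Lemma index_neq (T : eqType) (s : seq T) x y :
  x \in s -> y \in s -> x != y -> index x s != index y s.
Proof.
move=> xs ys; apply: contra => /eqP e.
by rewrite -(nth_index x xs) e nth_index.
Qed.

Lemma amgm2 a b : 2 * (a * b) <= a ^ 2 + b ^ 2.
Proof.
wlog h : a b / a <= b.
  move=> H; case: (leqP a b) => h; first exact: H.
  by rewrite [a * b]mulnC [a ^ 2 + _]addnC; apply: H; exact: ltnW.
rewrite -(subnKC h); move: (b - a) => c; nia.
Qed.
Lemma amgm4 a b : 2 * (a ^ 2 * b ^ 2) <= a * b ^ 3 + b * a ^ 3.
Proof.
wlog h : a b / a <= b.
  move=> H; case: (leqP a b) => h; first exact: H.
  by rewrite [a ^ 2 * _]mulnC [a * _ + _]addnC; apply: H; exact: ltnW.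
rewrite -(subnKC h); move: (b - a) => c; nia.
Qed.

Section Upper.
Variables (n p : nat) (P : 'I_p -> seq 'I_n).
Hypotheses (HU : forall i, uniq (P i)) (HN : nocommon P).

Definition deg (x : 'I_n) := \sum_(i < p) (x \in P i : nat).

Lemma S_deg : \sum_i size (P i) = \sum_x deg x.
Proof.
rewrite /deg exchange_big /=; apply: eq_bigr => i _; exact: size_sum.
Qed.

Lemma prec_le1 x y : \sum_i (precedes (P i) x y : nat) <= 1.
Proof.
apply: sum_le1 => i j Hi Hj; case: (eqVneq i j) => // /eqP ij.
by case: (HN ij Hi Hj).
Qed.

Lemma pair_le2 x y : x != y -> \sum_i ((x \in P i) * (y \in P i)) <= 2.
Proof.
move=> xy.
apply: (@leq_trans (\sum_i ((precedes (P i) x y : nat) + (precedes (P i) y x : nat)))).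
  apply: leq_sum => i _; case xi: (x \in P i); case yi: (y \in P i) => //.
  rewrite /precedes xi yi /=.
  by case: (ltngtP (index x (P i)) (index y (P i))) => // /eqP;
     rewrite (negbTE (index_neq xi yi xy)).
by rewrite big_split /= -[2]/(1 + 1) leq_add ?prec_le1.
Qed.

Lemma sumsq_bound : \sum_i (size (P i))^2 <= 2 * n^2 + \sum_i size (P i).
Proof.
have E i : (size (P i))^2 = \sum_x \sum_y ((x \in P i) * (y \in P i)).
  by rewrite size_sum // expnS expn1 big_distrl /=; apply: eq_bigr => x _;
     rewrite big_distrr.
rewrite (eq_bigr _ (fun i _ => E i)) exchange_big /=.
rewrite (eq_bigr (fun x => \sum_y \sum_i ((x \in P i) * (y \in P i))));
  last by move=> x _; rewrite exchange_big.
apply: (@leq_trans (\sum_(x < n) \sum_(y < n) (2 + (x == y) * deg x))).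
  apply: leq_sum => x _; apply: leq_sum => y _.
  case: (eqVneq x y) => [<-|xy]; last by rewrite mul0n addn0 pair_le2.
  rewrite mul1n /deg; apply: leq_trans (leq_addl _ _).
  by apply: leq_sum => i _; case: (x \in P i).
rewrite S_deg; apply: eq_leq.
rewrite (eq_bigr (fun x => 2 * n + deg x)); last first.
  by move=> x _; rewrite big_split /= sum_nat_const card_ord sum_eq1' mulnC.
rewrite big_split /= sum_nat_const card_ord; lia.
Qed.


Definition c3 (i j k : 'I_p) := [&& i != j, j != k & i != k].

Definition T3 (v : 'I_n) := \sum_i \sum_j \sum_k
  ((v \in P i) * (v \in P j) * (v \in P k) * c3 i j k).

Lemma orient i v w : v \in P i -> w \in P i -> v != w ->
  precedes (P i) v w || precedes (P i) w v.
Proof.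
move=> vi wi vw; rewrite /precedes vi wi /=.
by case: (ltngtP (index v (P i)) (index w (P i))) => // /eqP;
   rewrite (negbTE (index_neq vi wi vw)).
Qed.

Lemma three_paths i j k v w : c3 i j k -> v != w ->
  v \in P i -> v \in P j -> v \in P k ->
  w \in P i -> w \in P j -> w \in P k -> False.
Proof.
case/and3P => /eqP ij /eqP jk /eqP ik vw vi vj vk wi wj wk.
have oi := orient vi wi vw; have oj := orient vj wj vw; have ok := orient vk wk vw.
case Ei: (precedes (P i) v w) oi => /= oi;
case Ej: (precedes (P j) v w) oj => /= oj;
case Ek: (precedes (P k) v w) ok => /= ok.
- exact: HN ij Ei Ej.
- exact: HN ij Ei Ej.
- exact: HN ik Ei Ek.
- exact: HN jk oj ok.
- exact: HN jk Ej Ek.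
- exact: HN ik oi ok.
- exact: HN ij oi oj.
- exact: HN ij oi oj.
Qed.

Lemma T3_sum : \sum_v T3 v <= p ^ 3.
Proof.
rewrite /T3 exchange_big /=.
rewrite (eq_bigr (fun i => \sum_j \sum_k \sum_v
   ((v \in P i) * (v \in P j) * (v \in P k) * c3 i j k))); last first.
  move=> i _; rewrite exchange_big /=; apply: eq_bigr => j _.
  by rewrite exchange_big.
apply: (@leq_trans (\sum_(i < p) \sum_(j < p) \sum_(k < p) 1)); last first.
  by rewrite !sum_nat_const !card_ord !muln1 expnS expnS expn1 mulnA.
apply: leq_sum => i _; apply: leq_sum => j _; apply: leq_sum => k _.
rewrite (eq_bigr (fun v => ([&& v \in P i, v \in P j, v \in P k & c3 i j k] : nat)));
  last by move=> v _; case: (v \in P i); case: (v \in P j); case: (v \in P k);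
          case: (c3 i j k).
apply: sum_le1 => v w /and4P [vi vj vk c] /and4P [wi wj wk _].
case: (eqVneq v w) => // vw; case: (three_paths c vw vi vj vk wi wj wk).
Qed.

Lemma d3_bound v : deg v ^ 3 <= T3 v + 3 * deg v ^ 2.
Proof.
set a := fun i : 'I_p => (v \in P i : nat).
have Ed : deg v = \sum_i a i by [].
have E3 : deg v ^ 3 = \sum_i \sum_j \sum_k (a i * a j * a k).
  rewrite Ed expnS expnS expn1 big_distrl /=; apply: eq_bigr => i _.
  rewrite big_distrl /= big_distrr /=; apply: eq_bigr => j _.
  by rewrite mulnA big_distrr.
have X1 : \sum_i \sum_j \sum_k ((i == j) * (a j * a k)) = deg v ^ 2.
  rewrite Ed expnS expn1 big_distrl /=; apply: eq_bigr => i _.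
  rewrite (eq_bigr (fun j => (i == j) * (a j * \sum_k a k))).
    by rewrite sum_eq1'.
  by move=> j _; rewrite !big_distrr.
have X2 : \sum_i \sum_j \sum_k ((j == k) * (a i * a j)) = deg v ^ 2.
  rewrite Ed expnS expn1 big_distrl /=; apply: eq_bigr => i _.
  rewrite big_distrr /=; apply: eq_bigr => j _.
  by rewrite (sum_eq1' j (fun _ => a i * a j)).
have X3 : \sum_i \sum_j \sum_k ((i == k) * (a i * a j)) = deg v ^ 2.
  rewrite Ed expnS expn1 big_distrl /=; apply: eq_bigr => i _.
  rewrite big_distrr /=; apply: eq_bigr => j _.
  by rewrite (sum_eq1' i (fun _ => a i * a j)).
rewrite (_ : 3 * deg v ^ 2 = deg v ^ 2 + deg v ^ 2 + deg v ^ 2); last lia.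
rewrite E3 -{1}X1 -{1}X2 -X3 /T3 !addnA -!big_split /=.
apply: leq_sum => i _; rewrite -!big_split /=; apply: leq_sum => j _.
rewrite -!big_split /=; apply: leq_sum => k _.
rewrite /a /c3; case: (v \in P i); case: (v \in P j); case: (v \in P k);
  case: (i == j); case: (j == k); case: (i == k) => //=.
Qed.

Lemma symm_sum (A B : 'I_n -> 'I_n -> nat) :
  (forall i j, 2 * A i j <= B i j + B j i) ->
  \sum_i \sum_j A i j <= \sum_i \sum_j B i j.
Proof.
move=> H; rewrite -(leq_pmul2l (isT : 0 < 2)).
apply: (@leq_trans (\sum_i \sum_j (B i j + B j i))).
  rewrite big_distrr /=; apply: leq_sum => i _; rewrite big_distrr /=.
  by apply: leq_sum => j _; apply: H.
rewrite (eq_bigr (fun i => \sum_j B i j + \sum_j B j i)); last first.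
  by move=> i _; rewrite big_split.
by rewrite big_split /= [X in _ + X]exchange_big /= addnn mul2n.
Qed.

Lemma CS1 (f : 'I_n -> nat) : (\sum_i f i) ^ 2 <= n * \sum_i f i ^ 2.
Proof.
have -> : (\sum_i f i) ^ 2 = \sum_i \sum_j (f i * f j).
  rewrite expnS expn1 big_distrl /=; apply: eq_bigr => i _; exact: big_distrr.
have -> : n * \sum_i f i ^ 2 = \sum_(i < n) \sum_(j < n) f j ^ 2.
  by rewrite sum_nat_const card_ord.
apply: symm_sum => i j; rewrite addnC; exact: amgm2.
Qed.

Lemma CS2 (f : 'I_n -> nat) :
  (\sum_i f i ^ 2) ^ 2 <= (\sum_i f i) * \sum_i f i ^ 3.
Proof.
have -> : (\sum_i f i ^ 2) ^ 2 = \sum_i \sum_j (f i ^ 2 * f j ^ 2).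
  rewrite expnS expn1 big_distrl /=; apply: eq_bigr => i _; exact: big_distrr.
have -> : (\sum_i f i) * \sum_i f i ^ 3 = \sum_i \sum_j (f i * f j ^ 3).
  rewrite big_distrl /=; apply: eq_bigr => i _; exact: big_distrr.
apply: symm_sum => i j; exact: amgm4.
Qed.

Lemma holder3 (f : 'I_n -> nat) : (\sum_i f i) ^ 3 <= n ^ 2 * \sum_i f i ^ 3.
Proof.
have h1 := CS1 f; have h2 := CS2 f.
set E := \sum_i f i in h1 h2 *; set Q := \sum_i f i ^ 2 in h1 h2.
set C := \sum_i f i ^ 3 in h2 *.
case: (posnP E) => [->|Ep]; first by rewrite exp0n.
have : E * E ^ 3 <= E * (n ^ 2 * C).
  have : E ^ 4 <= n ^ 2 * Q ^ 2.
    have : (E ^ 2) ^ 2 <= (n * Q) ^ 2 by rewrite leq_exp2r.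
    by rewrite -expnM expnMn.
  have : n ^ 2 * Q ^ 2 <= n ^ 2 * (E * C) by rewrite leq_mul2l h2 orbT.
  move=> a b; have := leq_trans b a; nia.
by rewrite leq_pmul2l.
Qed.

Lemma upper2 : exists E, \sum_i size (P i) <= E + 3 * n /\ E ^ 3 <= n ^ 2 * p ^ 3.
Proof.
exists (\sum_x (deg x - 3)); split.
  rewrite S_deg (@leq_trans (\sum_(x < n) (deg x - 3 + 3))) //.
    by apply: leq_sum => x _; lia.
  by rewrite big_split /= sum_nat_const card_ord mulnC.
apply: (leq_trans (holder3 _)); rewrite leq_mul2l; apply/orP; right.
apply: (leq_trans _ T3_sum); apply: leq_sum => x _.
have := d3_bound x; case: (leqP (deg x) 3) => h.
  by move=> _; rewrite (_ : deg x - 3 = 0) //; lia.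
move: (deg x) h => d h; nia.
Qed.

Lemma CSp (f : 'I_p -> nat) : (\sum_i f i) ^ 2 <= p * \sum_i f i ^ 2.
Proof.
have -> : (\sum_i f i) ^ 2 = \sum_i \sum_j (f i * f j).
  rewrite expnS expn1 big_distrl /=; apply: eq_bigr => i _; exact: big_distrr.
have -> : p * \sum_i f i ^ 2 = \sum_(i < p) \sum_(j < p) f j ^ 2.
  by rewrite sum_nat_const card_ord.
rewrite -(leq_pmul2l (isT : 0 < 2)).
apply: (@leq_trans (\sum_i \sum_j (f j ^ 2 + f i ^ 2))).
  rewrite big_distrr /=; apply: leq_sum => i _; rewrite big_distrr /=.
  by apply: leq_sum => j _; rewrite addnC; exact: amgm2.
rewrite (eq_bigr (fun i => \sum_j f j ^ 2 + \sum_(j < p) f i ^ 2)); last first.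
  by move=> i _; rewrite big_split.
by rewrite big_split /= [X in _ + X]exchange_big /= addnn mul2n.
Qed.

Lemma upper1 : (\sum_i size (P i)) ^ 2 <= p * (2 * n ^ 2 + \sum_i size (P i)).
Proof. by apply: (leq_trans (CSp _)); rewrite leq_mul2l sumsq_bound orbT. Qed.

End Upper.

End UpperM.
Import UpperM.

Module LinesM.
Import all_algebra.
Import GRing.Theory.
Local Open Scope ring_scope.

Section Lines.
Variables (F : finFieldType) (al be : nat) (xs : 'I_al -> F) (ms : 'I_be -> F).
Hypotheses (xs_inj : injective xs) (ms_inj : injective ms).

Definition sL (P : 'I_be * F) : seq ('I_al * F) :=
  [seq (x, xs x * ms P.1 + P.2) | x <- enum 'I_al].

Lemma sL_uniq P : uniq (sL P).
Proof.
rewrite map_inj_uniq ?enum_uniq // => x y [] //.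
Qed.

Lemma sL_size P : size (sL P) = al.
Proof. by rewrite size_map size_enum_ord. Qed.

Lemma mem_sL P z : z \in sL P -> z.2 = xs z.1 * ms P.1 + P.2.
Proof. by case/mapP => x _ ->. Qed.

Lemma sL_nocommon : nocommon sL.
Proof.
move=> [m c] [m' c'] x y PQ /and3P [xP yP _] /and3P [xQ yQ /= Hi].
have xy : x != y by apply/eqP => e; rewrite e ltnn in Hi.
move: (mem_sL xP) (mem_sL yP) (mem_sL xQ) (mem_sL yQ) => /= e1 e2 e3 e4.
have : (xs x.1 - xs y.1) * (ms m - ms m') = 0.
  have : (xs x.1 * ms m + c) - (xs y.1 * ms m + c) =
         (xs x.1 * ms m' + c') - (xs y.1 * ms m' + c') by rewrite -e1 -e2 -e3 -e4.
  move=> h; rewrite -[LHS]subr0 -(subrr ((xs x.1 * ms m' + c') - (xs y.1 * ms m' + c'))).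
  rewrite -{1}h; ring.
move/eqP; rewrite mulf_eq0 !subr_eq0 => /orP [/eqP /xs_inj e|/eqP /ms_inj e].
- have e' : x.2 = y.2 by rewrite e1 e2 e.
  by case/eqP: xy; rewrite (surjective_pairing x) (surjective_pairing y) e e'.
- subst m'; apply: PQ; congr (_, _).
  by apply: (addrI (xs x.1 * ms m)); rewrite -e1 -e3.
Qed.

End Lines.

Lemma lines_ach (F : finFieldType) n p al be :
  (al <= #|F|)%N -> (be <= #|F|)%N -> (al * #|F| <= n)%N -> (be * #|F| <= p)%N ->
  achievable n p 2 (be * #|F| * al).
Proof.
move=> ha hb hn hp.
pose xs (i : 'I_al) : F := enum_val (widen_ord ha i).
pose ms (i : 'I_be) : F := enum_val (widen_ord hb i).
have xi : injective xs by move=> i j /enum_val_inj /(congr1 val) /= /val_inj.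
have mi : injective ms by move=> i j /enum_val_inj /(congr1 val) /= /val_inj.
have hA : (#|{: 'I_al * F}| <= n)%N by rewrite card_prod card_ord.
have hI : (#|{: 'I_be * F}| <= p)%N by rewrite card_prod card_ord.
have := transfer hA hI (sL_uniq xs ms) (sL_nocommon xi mi).
rewrite (eq_bigr (fun _ => al)); last by move=> i _; rewrite sL_size.
by rewrite sum_nat_const card_prod card_ord.
Qed.

End LinesM.
Import LinesM.

Module HyperM.
Import all_algebra fingroup cyclic finfield.
Import GRing.Theory.
Local Open Scope ring_scope.

Lemma alg_key (F : fieldType) (a a' b b' r X Y : F) :
  X * (a - r) ^+ 2 = Y * (a' - r) ^+ 2 -> b - X * (a - r) = b' - Y * (a' - r) ->
  X * Y * (a' - a) ^+ 2 = (b - b') ^+ 2.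
Proof.
move=> e1 e2.
have -> : b - b' = X * (a - r) - Y * (a' - r).
  by rewrite -[b](subrK (X * (a - r))) e2; ring.
apply/eqP; rewrite eq_sym -subr_eq0; apply/eqP.
have -> : (X * (a - r) - Y * (a' - r)) ^+ 2 - X * Y * (a' - a) ^+ 2
   = X * (X * (a - r) ^+ 2 - Y * (a' - r) ^+ 2) + Y * (Y * (a' - r) ^+ 2 - X * (a - r) ^+ 2)
  by ring.
by rewrite e1 !subrr !mulr0 addr0.
Qed.

Lemma alg_char2 (F : fieldType) (c2 : 2%:R = 0 :> F) (A B : F) :
  A ^+ 2 = B ^+ 2 -> A = B.
Proof.
move=> e; apply/eqP; rewrite -subr_eq0.
have : (A - B) ^+ 2 == 0.
  have -> : (A - B) ^+ 2 = (A ^+ 2 - B ^+ 2) + 2%:R * (B ^+ 2 - A * B) by ring.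
  by rewrite e subrr c2 mul0r addr0.
by rewrite expf_eq0.
Qed.

Lemma sum_lt (u v h q1 : nat) : (u < h)%N -> (v < h)%N -> (h.*2 < q1)%N -> (u + v < q1)%N.
Proof. rewrite -addnn; lia. Qed.
Lemma sum_eq (a b c d : nat) : (a + b = c + d)%N -> (a <= c)%N -> (b <= d)%N -> a = c /\ b = d.
Proof. lia. Qed.

Section Hyper.
Variables (F : finFieldType) (g : F) (al be h : nat).
Variables (as_ : 'I_al -> F) (rs : 'I_be -> F).
Hypotheses (c2 : 2%:R = 0 :> F) (gP : (#|F|.-1).-primitive_root g)
  (hh : (h.*2 < #|F|.-1)%N) (as_inj : injective as_) (rs_inj : injective rs).

Let q1 := #|F|.-1.

Lemma gpow_inj (i j : nat) : (i < q1)%N -> (j < q1)%N -> g ^+ i = g ^+ j -> i = j.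
Proof.
move=> hi hj /eqP; rewrite (eq_prim_root_expr gP) !modn_small //; exact/eqP.
Qed.

Lemma g_neq0 : g != 0.
Proof.
apply/eqP => g0; have := prim_expr_order gP; rewrite g0 expr0n.
by rewrite eqn0Ngt (prim_order_gt0 gP) /= => /esym/eqP; rewrite oner_eq0.
Qed.

Definition dlog (z : F) : nat := index z (mkseq (fun i => g ^+ i) q1).

Lemma dlogE k : (k < q1)%N -> dlog (g ^+ k) = k.
Proof.
move=> hk; rewrite /dlog -(nth_mkseq 0 (fun i => g ^+ i) hk) index_uniq ?size_mkseq //.
apply/mkseq_uniqP => i j; rewrite !inE => hi hj; exact: gpow_inj.
Qed.

Definition node (a b : F) (k : nat) (r : 'I_be) : F * 'I_be * F :=
  (g ^+ k * (a - rs r) ^+ 2, r, b - g ^+ k * (a - rs r)).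

Definition key (a : F) (x : F * 'I_be * F) : nat := dlog (x.1.1 / (a - rs x.1.2) ^+ 2).

Lemma key_node a b k r : rs r != a -> (k < q1)%N -> key a (node a b k r) = k.
Proof.
move=> ra hk; rewrite /key /node /= mulfK ?dlogE //.
by rewrite expf_neq0 // subr_eq0 eq_sym.
Qed.

Definition raw (P : 'I_al * F) :=
  [seq node (as_ P.1) P.2 k r | r <- [seq r <- enum 'I_be | rs r != as_ P.1],
                                k <- iota 0 h].

Definition sH (P : 'I_al * F) :=
  sort (fun x y => (key (as_ P.1) x <= key (as_ P.1) y)%N) (raw P).

Lemma hq1 k : (k < h)%N -> (k < q1)%N.
Proof.
move=> hk; apply: (leq_trans hk); apply: leq_trans (ltnW hh).
by rewrite -addnn leq_addr.
Qed.

Lemma mem_raw P x : x \in raw P ->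
  exists r k, [/\ rs r != as_ P.1, (k < h)%N & x = node (as_ P.1) P.2 k r].
Proof.
case/allpairsP => [[r k] /= [hr hk ->]]; exists r, k.
by move: hr hk; rewrite mem_filter mem_iota add0n => /andP [hr' _] /andP [_ hk'].
Qed.

Lemma raw_uniq P : uniq (raw P).
Proof.
apply: allpairs_uniq; first by rewrite filter_uniq ?enum_uniq.
  exact: iota_uniq.
move=> [r k] [r' k'] /allpairsP [[r1 k1] [/= hr1 hk1 [-> ->]]].
move=> /allpairsP [[r2 k2] [/= _ hk2 [-> ->]]] /= [e1 e2 e3].
subst r2; congr (_, _); apply: gpow_inj.
- by move: hk1; rewrite mem_iota add0n => /andP [_ /hq1].
- by move: hk2; rewrite mem_iota add0n => /andP [_ /hq1].
- apply: (mulIf _ e1); rewrite expf_neq0 // subr_eq0 eq_sym.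
  by move: hr1; rewrite mem_filter => /andP [].
Qed.

Lemma sH_uniq P : uniq (sH P).
Proof. by rewrite sort_uniq raw_uniq. Qed.

Lemma sH_size P : ((be - 1) * h <= size (sH P))%N.
Proof.
rewrite size_sort size_allpairs size_iota leq_mul2r; apply/orP; right.
have c1 : (count (fun r => rs r == as_ P.1) (enum 'I_be) <= 1)%N.
  rewrite -(count_map rs (pred1 (as_ P.1))) count_uniq_mem ?leq_b1 //.
  by rewrite map_inj_uniq ?enum_uniq.
have E : (count (fun r => rs r == as_ P.1) (enum 'I_be) +
          count (fun r => rs r != as_ P.1) (enum 'I_be) = be)%N.
  by rewrite -[RHS](size_enum_ord be); exact: count_predC.
rewrite size_filter; lia.
Qed.

Lemma prec_key P x y : precedes (sH P) x y ->
  (key (as_ P.1) x <= key (as_ P.1) y)%N.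
Proof.
case/and3P => xs ys hi.
have tr : transitive (fun x y => (key (as_ P.1) x <= key (as_ P.1) y)%N).
  by move=> u v w; apply: leq_trans.
have tot : total (fun x y => (key (as_ P.1) x <= key (as_ P.1) y)%N).
  by move=> u v; apply: leq_total.
have := sorted_ltn_index tr (sort_sorted tot (raw P)).
by apply.

Qed.

Lemma mem_sH P x : x \in sH P ->
  exists r k, [/\ rs r != as_ P.1, (k < h)%N & x = node (as_ P.1) P.2 k r].
Proof. by rewrite mem_sort => /mem_raw. Qed.

Lemma sH_nocommon : nocommon sH.
Proof.
move=> [ai b] [ai' b'] x y PQ Px Py.
have kP := prec_key Px; have kQ := prec_key Py.
have xy : x != y by apply: precedes_neq Px.
case/and3P: Px => xP yP _; case/and3P: Py => xQ yQ _.
move: kP kQ xy.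
have [rx [kx [hrx hkx ex0]]] := mem_sH xP.
have [ry [ky [hry hky ey0]]] := mem_sH yP.
have [rx' [kx' [hrx' hkx' ex]]] := mem_sH xQ.
have [ry' [ky' [hry' hky' ey]]] := mem_sH yQ.
rewrite /= in hrx hry hrx' hry' ex ey ex0 ey0 *.
rewrite ex0 in ex; rewrite ey0 in ey; subst x y.
have ex' := ex; have ey' := ey; rewrite /node in ex' ey'.
case: ex' => e1 e2 e3; case: ey' => f1 f2 f3; subst rx' ry'.
rewrite [in key (as_ ai') _]ex [in key (as_ ai') (node _ _ ky _)]ey.
rewrite !key_node ?hq1 // => hk hk' xy.
set a := as_ ai in e1 e3 f1 f3 hrx hry xy *; set a' := as_ ai' in e1 e3 f1 f3 hrx' hry' *.
have [eaa|naa] := eqVneq a a'.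
  exfalso; apply: PQ; rewrite -eaa in e1 e3.
  have ha : a - rs rx != 0 by rewrite subr_eq0 eq_sym.
  have gk : g ^+ kx = g ^+ kx' := mulIf (expf_neq0 2 ha) e1.
  rewrite gk in e3; have eb : b = b' by move/addIr: e3.
  by rewrite eb (as_inj eaa).
have nz : (a' - a) ^+ 2 != 0 by rewrite expf_neq0 // subr_eq0 eq_sym.
have Kx := alg_key e1 e3; have Ky := alg_key f1 f3.
have sum : (kx + kx' = ky + ky')%N.
  have hs u v : (u < h)%N -> (v < h)%N -> (u + v < q1)%N.
    move=> hu hv; exact: sum_lt hu hv hh.
  apply: gpow_inj; rewrite ?hs // !exprD; apply: (mulIf nz).
  by rewrite Kx Ky.
have [ekx ekx'] := sum_eq sum hk hk'.
subst ky ky'; case/eqP: xy; rewrite /node.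
have XY : g ^+ kx != g ^+ kx'.
  apply/eqP => eXY; rewrite eXY in e1.
  have := alg_char2 c2 (mulfI (expf_neq0 kx' g_neq0) e1).
  move/(congr1 (fun z => z + rs rx)); rewrite !subrK => eaa.
  by rewrite eaa eqxx in naa.
have : (g ^+ kx - g ^+ kx') * (rs rx - rs ry) = 0.
  have : (b - g ^+ kx * (a - rs rx)) - (b - g ^+ kx * (a - rs ry)) =
         (b' - g ^+ kx' * (a' - rs rx)) - (b' - g ^+ kx' * (a' - rs ry)) by rewrite e3 f3.
  move/eqP; rewrite -subr_eq0 => /eqP h0; rewrite -[RHS]h0; ring.
move/eqP; rewrite mulf_eq0 subr_eq0 (negbTE XY) /= subr_eq0 => /eqP /rs_inj ->.
by [].
Qed.

End Hyper.

Lemma exists_prim (F : finFieldType) : exists g : F, (#|F|.-1).-primitive_root g.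
Proof.
set rs := [seq x <- enum F | x != 0].
have c2 : (1 < #|F|)%N.
  have : (0 < #|predC1 (0 : F)%R|)%N by apply/card_gt0P; exists 1; rewrite inE oner_neq0.
  rewrite cardC1; case: #|F| => [|[|m]] //.
have sz : size rs = #|F|.-1.
  rewrite size_filter.
  have := count_predC (pred1 0) (enum F).
  rewrite count_uniq_mem ?enum_uniq // mem_enum inE -cardT add1n => <-.
  by [].
have h1 : (0 < #|F|.-1)%N by rewrite -ltnS prednK ?(ltnW c2).
have h2 : all (#|F|.-1).-unity_root rs.
  apply/allP => x; rewrite mem_filter => /andP [x0 _].
  rewrite unity_rootE; apply/eqP; apply: (mulIf x0).
  by rewrite -exprSr prednK ?(ltnW c2) // expf_card mul1r.
have h3 : uniq rs by rewrite filter_uniq ?enum_uniq.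
have h4 : (#|F|.-1 <= size rs)%N by rewrite sz.
have := has_prim_root h1 h2 h3 h4.
by case/hasP => g _ gp; exists g.
Qed.

Lemma hyper_ach (F : finFieldType) n p al be h :
  2 \in [pchar F] -> (al <= #|F|)%N -> (be <= #|F|)%N -> (h.*2 < #|F|.-1)%N ->
  (#|F| * be * #|F| <= n)%N -> (al * #|F| <= p)%N ->
  exists s, achievable n p 2 s /\ (al * #|F| * ((be - 1) * h) <= s)%N.
Proof.
move=> ch ha hb hh hn hp.
have c2 : 2%:R = 0 :> F := pcharf0 ch.
have [g gP] := exists_prim F.
pose xs (i : 'I_al) : F := enum_val (widen_ord ha i).
pose ms (i : 'I_be) : F := enum_val (widen_ord hb i).
have xi : injective xs by move=> i j /enum_val_inj /(congr1 val) /= /val_inj.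
have mi : injective ms by move=> i j /enum_val_inj /(congr1 val) /= /val_inj.
have hA : (#|{: F * 'I_be * F}| <= n)%N by rewrite !card_prod card_ord.
have hI : (#|{: 'I_al * F}| <= p)%N by rewrite card_prod card_ord.
have := transfer hA hI (sH_uniq xs ms gP hh) (sH_nocommon c2 gP hh xi mi).
move=> H; eexists; split; first exact: H.
apply: (@leq_trans (\sum_(P : 'I_al * F) ((be - 1) * h))).
  by rewrite sum_nat_const card_prod card_ord.
by apply: leq_sum => P _; apply: (sH_size xs gP hh mi).
Qed.

End HyperM.
Import HyperM.

Module FinalM.
Import all_algebra fingroup finfield.

Lemma ach_n n p : 0 < n -> 0 < p -> achievable n p 2 n.
Proof.
move=> hn hp.
have hA : #|{: 'I_n}| <= n by rewrite card_ord.
have hI : #|{: 'I_1}| <= p by rewrite card_ord.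
have := transfer (s := fun _ : 'I_1 => enum 'I_n) hA hI.
rewrite big_ord1 size_enum_ord; apply => //.
- by move=> _; exact: enum_uniq.
- by move=> i j x y ij; case: ij; rewrite !ord1.
Qed.

Lemma ach_p n p : 0 < n -> 0 < p -> achievable n p 2 p.
Proof.
move=> hn hp.
have hA : #|{: 'I_1}| <= n by rewrite card_ord.
have hI : #|{: 'I_p}| <= p by rewrite card_ord.
have := transfer (s := fun _ : 'I_p => [:: ord0 : 'I_1]) hA hI.
rewrite sum_nat_const card_ord muln1; apply => //.
by move=> i j x y ij /and3P [_ _]; rewrite !ord1 ltnn.
Qed.

Lemma exists_k (P : nat -> Prop) m : (forall k, m <= 2 ^ k -> P k) -> exists k, P k.
Proof. by move=> H; exists m; apply: H; apply: ltnW; apply: ltn_expl. Qed.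


Lemma L2arith n p q al be :
  n <= 8 * p -> 256 < p -> 256 * p < n ^ 2 -> 0 < q -> q ^ 2 < 4 * maxn n p ->
  n < al.+1 * q -> p < be.+1 * q -> n ^ 2 * p <= (24 * (be * q * al)) ^ 2.
Proof.
move=> h8 hp hn2 q0 q4 e1 e2.
have n16 : 16 < n.
  rewrite ltnNge; apply/negP => h; have : n ^ 2 <= 16 ^ 2 by rewrite leq_exp2r.
  lia.
have qn : q < n.
  rewrite -(@ltn_exp2r _ _ 2) //.
  case: (leqP n p) => h; [move: q4; rewrite (maxn_idPr h) | move: q4; rewrite (maxn_idPl (ltnW h))].
    lia.
  have : 4 * n <= n ^ 2 by rewrite expnS expn1 leq_mul2r; lia.
  lia.
have qp : q < p.
  rewrite -(@ltn_exp2r _ _ 2) //.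
  have : 32 * p <= p ^ 2 by rewrite expnS expn1 leq_mul2r; lia.
  case: (leqP n p) => h; [move: q4; rewrite (maxn_idPr h) | move: q4; rewrite (maxn_idPl (ltnW h))];
    lia.
have al1 : 0 < al by case: al e1 => // e1; rewrite mul1n in e1; lia.
have be1 : 0 < be by case: be e2 => // e2; rewrite mul1n in e2; lia.
have f1 : n < 2 * al * q by apply: (leq_trans e1); rewrite leq_mul2r; lia.
have f2 : p < 2 * be * q by apply: (leq_trans e2); rewrite leq_mul2r; lia.
have f3 : n * p < 4 * (be * q * al) * q.
  have := ltn_mul f1 f2; rewrite (_ : 2 * al * q * (2 * be * q) = 4 * (be * q * al) * q) //.
  ring.
have f4 : q ^ 2 <= 36 * p.
  case: (leqP n p) => h; [move: q4; rewrite (maxn_idPr h) | move: q4; rewrite (maxn_idPl (ltnW h))];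
    lia.
set s := be * q * al in f3 *.
have g1 : (n * p) ^ 2 < (4 * s * q) ^ 2 by rewrite ltn_exp2r.
have g2 : 36 * (n ^ 2 * p ^ 2) < (24 * s) ^ 2 * q ^ 2.
  move: g1; rewrite (_ : (24 * s) ^ 2 * q ^ 2 = 36 * (4 * s * q) ^ 2); last by ring.
  by rewrite expnMn ltn_mul2l.
have g3 : (24 * s) ^ 2 * q ^ 2 <= (24 * s) ^ 2 * (36 * p) by rewrite leq_mul2l f4 orbT.
have g4 : (36 * p) * (n ^ 2 * p) < (36 * p) * (24 * s) ^ 2.
  rewrite (_ : 36 * p * (n ^ 2 * p) = 36 * (n ^ 2 * p ^ 2)); last by ring.
  rewrite [X in _ < X]mulnC; exact: leq_trans g2 g3.
have hp0 : 0 < 36 * p by lia.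
by move: g4; rewrite ltn_pmul2l // => /ltnW.
Qed.

Lemma L2nat n p : n <= 8 * p -> 256 < p -> 256 * p < n ^ 2 ->
  exists s, achievable n p 2 s /\ n ^ 2 * p <= (24 * s) ^ 2.
Proof.
move=> h8 hp hn2.
have exP : exists k, (maxn n p <= (2 ^ k) ^ 2).
  apply: (exists_k (m := maxn n p)) => k hk; apply: (leq_trans hk).
  by rewrite expnS expn1 leq_pmulr // expn_gt0.
case: (ex_minnP exP) => k hk kmin.
have k0 : 0 < k.
  case: k hk kmin => // hk _; move: hk; rewrite expn0 exp1n; lia.
set q := 2 ^ k in hk.
have q4 : q ^ 2 < 4 * maxn n p.
  have : ~~ (maxn n p <= (2 ^ k.-1) ^ 2).
    by apply/negP => /kmin; rewrite -ltnS prednK // ltnn.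
  have et : 2 ^ k = 2 * 2 ^ k.-1 by rewrite -expnS prednK.
  rewrite -ltnNge /q et; move: (2 ^ k.-1) => t; timeout 10 nia.
have q0 : 0 < q by rewrite expn_gt0.
have [F chF cardF] := pPrimePowerField (isT : prime 2) k0.
rewrite -/q in cardF.
set al := n %/ q; set be := p %/ q.
have [hkn hkp] : n <= q * q /\ p <= q * q.
  by move: hk; rewrite geq_max expnS expn1 => /andP.
have ha : al <= #|F| by rewrite /al cardF -ltnS ltn_divLR // mulSn; lia.
have hb : be <= #|F| by rewrite /be cardF -ltnS ltn_divLR // mulSn; lia.
have hn : al * #|F| <= n by rewrite /al cardF leq_divM.
have hp' : be * #|F| <= p by rewrite /be cardF leq_divM.
have := lines_ach ha hb hn hp'; rewrite cardF => Hach.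
exists (be * q * al); split => //.
apply: L2arith => //; rewrite ?ltn_ceil //.
Qed.


Lemma L3arith n p t al be h s :
  8 * p < n -> 256 < p -> 4096 * n < p ^ 3 -> 0 < t -> h = t - 1 ->
  ((2 * t) ^ 2 < 4 * p \/ (2 * t) ^ 3 < 8 * n) -> n <= (2 * t) ^ 3 ->
  p < al.+1 * (2 * t) -> n < be.+1 * ((2 * t) * (2 * t)) ->
  al * (2 * t) * ((be - 1) * h) <= s -> n * p < 24 * s * (2 * t).
Proof.
move=> h8 hp hp3 t0 eh hmin hq3 e1 e2 hs.
set q := 2 * t in hmin hq3 e1 e2 hs *.
have q4 : 4 <= q.
  rewrite leqNgt; apply/negP => hq; have : q ^ 3 <= 3 ^ 3 by rewrite leq_exp2r // -ltnS.
  lia.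
have h4 : q <= 4 * h by rewrite eh /q; lia.
have qp : q < p.
  rewrite -(@ltn_exp2r _ _ 3) //; case: hmin => hm.
    have : q ^ 3 < p ^ 3.
      have : q ^ 2 < p ^ 2.
        apply: (leq_trans hm); rewrite expnS expn1 leq_mul2r; lia.
      by rewrite !ltn_exp2r.
    by [].
  lia.
have al1 : 0 < al by case: al e1 hs => // e1; rewrite mul1n in e1; lia.
have f1 : p < 2 * al * q by apply: (leq_trans e1); rewrite leq_mul2r; lia.
have n2 : 2 * (q * q) <= n.
  case: hmin => hm; first by move: hm; rewrite expnS expn1; lia.
  rewrite leqNgt; apply/negP => hn.
  have a1 : n ^ 3 < (2 * (q * q)) ^ 3 by rewrite ltn_exp2r.
  have a2 : (q ^ 3) ^ 2 < (8 * n) ^ 2 by rewrite ltn_exp2r.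
  have a3 : n ^ 3 < 512 * n ^ 2.
    apply: (leq_trans a1); rewrite (_ : (2 * (q * q)) ^ 3 = 8 * (q ^ 3) ^ 2); last by ring.
    rewrite (_ : 512 * n ^ 2 = 8 * (8 * n) ^ 2); last by ring.
    by rewrite leq_mul2l ltnW.
  have : n < 512.
    move: a3; rewrite (_ : n ^ 3 = n * n ^ 2); last by ring.
    by rewrite ltn_mul2r => /andP [].
  lia.
have be2 : 2 <= be.
  rewrite ltnNge; apply/negP => hb.
  have : be.+1 * (q * q) <= 2 * (q * q) by rewrite leq_mul2r; lia.
  lia.
have f2 : n < 3 * (be - 1) * (q * q).
  apply: (leq_trans e2); rewrite leq_mul2r; lia.
have f3 : p * n * q < (2 * al * q) * (3 * (be - 1) * (q * q)) * (4 * h).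
  apply: (@leq_trans ((2 * al * q) * (3 * (be - 1) * (q * q)) * q)).
    rewrite ltn_pmul2r; last lia.
    exact: ltn_mul f1 f2.
  by rewrite leq_mul2l h4 orbT.
have f4 : (2 * al * q) * (3 * (be - 1) * (q * q)) * (4 * h) =
          (24 * q) * (al * q * ((be - 1) * h) * q) by ring.
rewrite f4 in f3.
have f5 : p * n * q < (24 * q) * (s * q).
  apply: (leq_trans f3); rewrite leq_mul2l; apply/orP; right.
  by rewrite leq_mul2r hs orbT.
move: f5; rewrite (_ : p * n * q = (n * p) * q); last by ring.
rewrite (_ : 24 * q * (s * q) = (24 * s * q) * q); last by ring.
rewrite ltn_mul2r => /andP [] //.
Qed.

Lemma L3nat n p : 8 * p < n -> 256 < p -> 4096 * n < p ^ 3 ->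
  exists s q, [/\ achievable n p 2 s, 0 < q, n * p < 24 * s * q &
                  (q ^ 2 < 4 * p \/ q ^ 3 < 8 * n)].
Proof.
move=> h8 hp hp3.
have exP : exists k, (p <= (2 ^ k) ^ 2) && (n <= (2 ^ k) ^ 3).
  apply: (exists_k (m := n + p)) => k hk; apply/andP; split.
    apply: (leq_trans _ (leq_trans hk _)); first by rewrite leq_addl.
    by rewrite expnS expn1 leq_pmulr // expn_gt0.
  apply: (leq_trans _ (leq_trans hk _)); first by rewrite leq_addr.
  by rewrite expnS leq_pmulr // !expn_gt0.
case: (ex_minnP exP) => k /andP [hkp hkn] kmin.
have k0 : 0 < k.
  case: k hkp hkn kmin => // _; rewrite expn0 exp1n; lia.
set t := 2 ^ k.-1.
have et : 2 ^ k = 2 * t by rewrite -expnS prednK.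
have t0 : 0 < t by rewrite expn_gt0.
have hmin : (2 * t) ^ 2 < 4 * p \/ (2 * t) ^ 3 < 8 * n.
  have : ~~ ((p <= t ^ 2) && (n <= t ^ 3)).
    by apply/negP => /kmin; rewrite -ltnS prednK // ltnn.
  rewrite negb_and -!ltnNge => /orP [] h; [left | right]; rewrite expnMn; lia.
have [F chF cardF] := pPrimePowerField (isT : prime 2) k0.
rewrite et in cardF hkp hkn.
set q := 2 * t in cardF hkp hkn hmin *.
set al := p %/ q; set be := n %/ (q * q); set h := t - 1.
have q0 : 0 < q by rewrite /q; lia.
have ha : al <= #|F|.
  by rewrite /al cardF -ltnS ltn_divLR // mulSn; move: hkp; rewrite expnS expn1; lia.
have hb : be <= #|F|.
  rewrite /be cardF -ltnS ltn_divLR; last by rewrite muln_gt0 q0.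
  rewrite mulSn.
  by move: hkn; rewrite expnS expnS expn1 mulnA; lia.
have hh : h.*2 < #|F|.-1 by rewrite cardF /h /q; lia.
have hn : #|F| * be * #|F| <= n.
  rewrite cardF (_ : q * be * q = be * (q * q)); last by ring.
  exact: leq_divM.
have hp' : al * #|F| <= p by rewrite cardF leq_divM.
have [s [Hach Hs]] := hyper_ach chF ha hb hh hn hp'.
exists s, q; split => //.
apply: (L3arith (al := al) (be := be) (h := h)) => //.
- by rewrite /al ltn_ceil.
- by rewrite /be ltn_ceil // muln_gt0 q0.
- by rewrite cardF in Hs.
Qed.

Lemma sqn (n : nat) : n ^ 2 = n * n.
Proof. by rewrite expnS expn1. Qed.
Lemma cuben (n : nat) : n ^ 3 = n * n * n.
Proof. by rewrite expnS expnS expn1 mulnA. Qed.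

Lemma upper_nat n p (P : 'I_p -> seq 'I_n) :
  path_system P -> bridge_girth_gt P 2 ->
  (psize P * psize P <= p * (2 * (n * n) + psize P))%N /\
  exists E, (psize P <= E + 3 * n)%N /\ (E * E * E <= n * n * (p * p * p))%N.
Proof.
move=> HP Hg; have HN := girth2_nocommon Hg.
split.
  by have := upper1 HP HN; rewrite /psize !sqn.
have [E [h1 h2]] := upper2 HP HN; exists E; split => //.
by move: h2; rewrite !cuben !sqn.
Qed.

Lemma L2nat' n p : n <= 8 * p -> 256 < p -> 256 * p < n * n ->
  exists s, achievable n p 2 s /\ n * n * p <= (24 * s) * (24 * s).
Proof.
move=> h1 h2 h3; have h3' : 256 * p < n ^ 2 by rewrite sqn.
have [s [H1 H2]] := @L2nat n p h1 h2 h3'.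
by exists s; move: H2; rewrite !sqn.
Qed.

Lemma L3nat' n p : 8 * p < n -> 256 < p -> 4096 * n < p * p * p ->
  exists s q, [/\ achievable n p 2 s, 0 < q, n * p < 24 * s * q &
                  (q * q < 4 * p \/ q * q * q < 8 * n)].
Proof.
move=> h1 h2 h3.
have h3' : 4096 * n < p ^ 3 by rewrite cuben.
have [s [q [H1 H2 H3 H4]]] := @L3nat n p h1 h2 h3'.
by exists s, q; split => //; move: H4; rewrite cuben sqn.
Qed.

End FinalM.
Import FinalM.

From Stdlib Require Import Reals Lra Psatz.
Module RealM.
Local Open Scope R_scope.

Lemma INR_muln (a b : nat) : INR (a * b)%nat = INR a * INR b.
Proof. exact: mult_INR. Qed.
Lemma INR_addn (a b : nat) : INR (a + b)%nat = INR a + INR b.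
Proof. exact: plus_INR. Qed.
Lemma INR_le (a b : nat) : (a <= b)%nat -> INR a <= INR b.
Proof. by move/leP; apply: le_INR. Qed.
Lemma INR_ltn (a b : nat) : (a < b)%nat -> INR a < INR b.
Proof. by move/ltP; apply: lt_INR. Qed.
Lemma INR_lt_nat (a b : nat) : INR a < INR b -> (a < b)%nat.
Proof. by move=> h; apply/ltP; apply: INR_lt. Qed.
Lemma INR_lit (k : nat) : INR k = IZR (Z.of_nat k).
Proof. exact: INR_IZR_INZ. Qed.

Lemma test : INR 256 = 256.
Proof. rewrite INR_lit. reflexivity. Qed.

Section R.
Variables (n p : nat).
Hypotheses (hn : (0 < n)%nat) (hp : (0 < p)%nat).
Let N := INR n.
Let Pp := INR p.
Let sp := sqrt Pp.
Let cn := Rpower N (1/3).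

Lemma N_pos : 0 < N.
Proof. by apply: (lt_INR 0); apply/ltP. Qed.
Lemma P_pos : 0 < Pp.
Proof. by apply: (lt_INR 0); apply/ltP. Qed.
Lemma sp_sq : sp * sp = Pp.
Proof. apply: sqrt_sqrt; have := P_pos; lra. Qed.
Lemma sp_pos : 0 < sp.
Proof. apply: sqrt_lt_R0; exact: P_pos. Qed.
Lemma cn_pos : 0 < cn.
Proof. rewrite /cn /Rpower; exact: exp_pos. Qed.
Lemma cn23 : Rpower N (2/3) = cn * cn.
Proof. by rewrite /cn -Rpower_plus; f_equal; field. Qed.
Lemma cn3 : cn * cn * cn = N.
Proof.
rewrite /cn -!Rpower_plus.
rewrite (_ : 1/3 + 1/3 + 1/3 = 1); last by field.
apply: Rpower_1; exact: N_pos.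
Qed.


Lemma INR2 : INR 2 = 2. Proof. by rewrite INR_lit. Qed.
Lemma INR3 : INR 3 = 3. Proof. by rewrite INR_lit. Qed.
Lemma INR4 : INR 4 = 4. Proof. by rewrite INR_lit. Qed.
Lemma INR8 : INR 8 = 8. Proof. by rewrite INR_lit. Qed.
Lemma INR24 : INR 24 = 24. Proof. by rewrite INR_lit. Qed.
Lemma INR256 : INR 256 = 256. Proof. by rewrite INR_lit. Qed.
Lemma INR4096 : INR 4096 = 4096. Proof. by rewrite INR_lit. Qed.

Lemma real_upper (B E : nat) :
  (B * B <= p * (2 * (n * n) + B))%nat -> (B <= E + 3 * n)%nat ->
  (E * E * E <= n * n * (p * p * p))%nat ->
  INR B <= 3 * (Rmin (N * sp) (Rpower N (2/3) * Pp) + N + Pp).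
Proof.
move=> /INR_le h1 /INR_le h2 /INR_le h3.
rewrite !(INR_muln, INR_addn) ?INR2 ?INR3 -/N -/Pp in h1 h2 h3.
rewrite cn23 -/cn.
have Np := N_pos; have Pq := P_pos; have sq := sp_sq; have spp := sp_pos.
have cp := cn_pos; have c3 := cn3.
rewrite -/N -/Pp -/sp -/cn in sq spp cp c3.
set b := INR B in h1 h2 h3 *; set e := INR E in h2 h3.
have b0 : 0 <= b by apply: pos_INR.
have e0 : 0 <= e by apply: pos_INR.
have ha : b <= Pp + 2 * N * sp.
  apply: Rnot_lt_le => hb.
  have k1 : 2 * N * sp < b - Pp by lra.
  have k2 : 0 <= 2 * N * sp by nra.
  have k3 : (2 * N * sp) * (2 * N * sp) < b * (b - Pp) by nra.
  have k4 : (2 * N * sp) * (2 * N * sp) = 4 * (N * N) * Pp by rewrite -sq; ring.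
  have k5 : 0 < N * N * Pp by apply: Rmult_lt_0_compat => //; nra.
  have k6 : b * (b - Pp) = b * b - Pp * b by ring.
  have k7 : Pp * (2 * (N * N) + b) = 2 * (N * N * Pp) + Pp * b by ring.
  lra.
have hb : e <= cn * cn * Pp.
  apply: Rnot_lt_le => he.
  set t := cn * cn * Pp in he.
  have t0 : 0 <= t by rewrite /t; nra.
  have k1 : t * t < e * e by nra.
  have k2 : t * t * t < e * e * e by nra.
  have k3 : t * t * t = N * N * (Pp * Pp * Pp) by rewrite /t -c3; ring.
  lra.
rewrite /Rmin; case: Rle_dec => _; lra.
Qed.

Lemma real_lower :
  1/96 * (Rmin (N * sp) (Rpower N (2/3) * Pp) + N + Pp) <= INR (beta n p 2).
Proof.
rewrite cn23 -/cn.
have Np := N_pos; have Pq := P_pos; have sq := sp_sq; have spp := sp_pos.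
have cp := cn_pos; have c3 := cn3.
rewrite -/N -/Pp -/sp -/cn in sq spp cp c3.
set b := INR (beta n p 2).
have hBn : N <= b by apply: INR_le; apply: beta_ge; apply: ach_n.
have hBp : Pp <= b by apply: INR_le; apply: beta_ge; apply: ach_p.
set M := Rmin (N * sp) (cn * cn * Pp).
have M0 : 0 <= M by rewrite /M /Rmin; case: Rle_dec => _; nra.
case: (Rle_lt_dec M (16 * (N + Pp))) => hM; first lra.
have hM1 : 16 * (N + Pp) < N * sp := Rlt_le_trans _ _ _ hM (Rmin_l _ _).
have hM2 : 16 * (N + Pp) < cn * cn * Pp := Rlt_le_trans _ _ _ hM (Rmin_r _ _).
suff S : M <= 48 * b by lra.
have sp16 : 16 < sp by nra.
have f1 : (256 < p)%nat by apply: INR_lt_nat; rewrite INR256 -/Pp; nra.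
have N16 : 16 * sp < N by nra.
have f2 : (256 * p < n * n)%nat.
  by apply: INR_lt_nat; rewrite !INR_muln INR256 -/Pp -/N; nra.
have cn16 : 16 * cn < Pp.
  have : 16 * (cn * cn * cn) < cn * cn * Pp by rewrite c3; lra.
  have : 0 < cn * cn by nra.
  nra.
have f3 : (4096 * n < p * p * p)%nat.
  apply: INR_lt_nat; rewrite !INR_muln INR4096 -/Pp -/N -c3.
  have k1 : 0 <= 16 * cn by lra.
  have k2 : (16 * cn) * (16 * cn) < Pp * Pp by nra.
  have k3 : (16 * cn) * (16 * cn) * (16 * cn) < Pp * Pp * Pp by nra.
  nra.
case: (ltnP (8 * p) n) => h8.
- have [s [q [Hach q0 H3 H4]]] := L3nat' h8 f1 f3.
  have hs : INR s <= b by apply: INR_le; apply: beta_ge.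
  have /INR_ltn H3' := H3; rewrite !INR_muln INR24 -/N -/Pp in H3'.
  set S := INR s in hs H3'; set Q := INR q in H3'.
  have S0 : 0 <= S by apply: pos_INR.
  have Q0 : 0 <= Q by apply: pos_INR.
  case: H4 => /INR_ltn; rewrite !INR_muln ?INR4 ?INR8 -/N -/Pp -/Q => H4.
  + have hQ : Q < 2 * sp by nra.
    have k1 : N * Pp < 48 * S * sp by nra.
    have k2 : N * sp < 48 * S.
      have : (N * sp) * sp < (48 * S) * sp by rewrite Rmult_assoc sq; lra.
      by move/(Rmult_lt_reg_r _ _ _ spp).
    have : M <= N * sp by apply: Rmin_l.
    lra.
  + have hQ : Q < 2 * cn.
      apply: Rnot_le_lt => hq.
      have k0 : 0 <= 2 * cn by lra.
      have k1 : (2 * cn) * (2 * cn) <= Q * Q by nra.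
      have k2 : (2 * cn) * (2 * cn) * (2 * cn) <= Q * Q * Q by nra.
      rewrite -c3 in H4; nra.
    have k1 : N * Pp < 48 * S * cn by nra.
    have k2 : cn * cn * Pp < 48 * S.
      have : (cn * cn * Pp) * cn < (48 * S) * cn.
        rewrite (_ : cn * cn * Pp * cn = (cn * cn * cn) * Pp); last by ring.
        by rewrite c3; lra.
      by move/(Rmult_lt_reg_r _ _ _ cp).
    have : M <= cn * cn * Pp by apply: Rmin_r.
    lra.
- have [s [Hach H2]] := L2nat' h8 f1 f2.
  have hs : INR s <= b by apply: INR_le; apply: beta_ge.
  have /INR_le H2' := H2; rewrite !INR_muln INR24 -/N -/Pp in H2'.
  set S := INR s in hs H2'.
  have S0 : 0 <= S by apply: pos_INR.
  have k1 : (N * sp) * (N * sp) <= (24 * S) * (24 * S).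
    rewrite (_ : N * sp * (N * sp) = N * N * (sp * sp)); last by ring.
    by rewrite sq.
  have k2 : N * sp <= 24 * S by nra.
  have : M <= N * sp by apply: Rmin_l.
  lra.
Qed.

End R.

End RealM.
Import RealM.

From mathcomp Require Import all_boot.
From Stdlib Require Import Reals.

Theorem theorem3p1 :
  exists c1 c2 : R, (0 < c1)%R /\ (0 < c2)%R /\
  forall n p : nat, (0 < n)%N -> (0 < p)%N ->
    beta n p 2 = beta_star n p 2 /\
    let F := (Rmin (INR n * sqrt (INR p)) (Rpower (INR n) (2/3) * INR p)
              + INR n + INR p)%R in
    (c1 * F <= INR (beta n p 2) <= c2 * F)%R.
Proof.
exists (1/96)%R, 3%R; split; first lra; split; first lra.
move=> n p hn hp; split; first exact: beta_eq.
move=> F; rewrite /F; split.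
- exact: real_lower.
- have [P [HP Hg HB]] := beta_ach n p 2.
  have [h1 [E [h2 h3]]] := upper_nat HP Hg.
  rewrite HB in h1 h2.
  exact: real_upper h1 h2 h3.
Qed.
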